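(* Let $n,m\ge 2$ and consider the LC orbit $\mathcal{O}(K_{n,m})$ of the complete bipartite graph, with isomorphic graphs identified. If $n\ne m$, the number of isomorphism classes of graphs in $\mathcal{O}(K_{n,m})$ is $6$; if $n=m$, it is $4$.
   Context: The local complement $c_v(G)$ complements the edges among the neighbours of $v$. $\mathcal{O}(G)$ is the set of all graphs on the labelled vertex set $V(G)$ obtainable from $G$ by finite sequences of local complements. *)

(* Defs.v *)
From mathcomp Require Import all_boot all_fingroup.
Set Implicit Arguments. Unset Strict Implicit. Unset Printing Implicit Defensive.

(* A graph on the (labelled) finite vertex set V is given by its set of
   ordered adjacent pairs; simple graphs are the symmetric irreflexive ones. *)
Definition graph (V : finType) := {set V * V}.

Definition adj (V : finType) (G : graph V) (x y : V) : bool := (x, y) \in G.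

Definition simple_graph (V : finType) (G : graph V) : bool :=
  [forall x, ~~ adj G x x] && [forall x, forall y, adj G x y == adj G y x].

Definition local_complement (V : finType) (v : V) (G : graph V) : graph V :=
  [set p : V * V |
     if [&& p.1 != p.2, adj G v p.1 & adj G v p.2] then ~~ adj G p.1 p.2
     else adj G p.1 p.2].

Definition lc_step (V : finType) : rel (graph V) :=
  fun G H => [exists v : V, H == local_complement v G].

Definition lc_orbit (V : finType) (G : graph V) : {set graph V} :=
  [set H | connect (@lc_step V) G H].

Definition isomorphic (V : finType) (G H : graph V) : bool :=
  [exists s : {perm V}, [forall x, forall y, adj G x y == adj H (s x) (s y)]].

Definition num_iso_classes (V : finType) (S : {set graph V}) : nat :=
  #|[set [set H in S | isomorphic G H] | G in S]|.

Definition side (n m : nat) (x : 'I_n + 'I_m) : bool :=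
  if x is inl _ then true else false.

Definition K_bip (n m : nat) : graph ('I_n + 'I_m)%type :=
  [set p : ('I_n + 'I_m) * ('I_n + 'I_m) | side p.1 != side p.2].

(* Main.v *)
Require Import Defs.
From mathcomp Require Import all_boot all_fingroup.
From mathcomp Require Import zify.
Set Implicit Arguments. Unset Strict Implicit. Unset Printing Implicit Defensive.

Definition mk (V : finType) (e : V -> V -> bool) : graph V :=
  [set p : V * V | (p.1 != p.2) && e p.1 p.2].

Lemma adj_mk (V : finType) (e : V -> V -> bool) x y : adj (mk e) x y = (x != y) && e x y.
Proof. by rewrite /adj inE. Qed.

Notation VV n m := ('I_n + 'I_m)%type.

Definition Kg n m : graph (VV n m) := mk (fun x y => side x != side y).
Definition T2 n m : graph (VV n m) := mk (fun x y => ~~ (side x && side y)).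
Definition T3 n m : graph (VV n m) := mk (fun x y => side x || side y).
Definition T4 n m (b : 'I_m) : graph (VV n m) :=
  mk (fun x y => [|| x == inr b, y == inr b | side x && side y]).
Definition T5 n m (a : 'I_n) : graph (VV n m) :=
  mk (fun x y => [|| x == inl a, y == inl a | ~~ side x && ~~ side y]).
Definition Dg n m (a : 'I_n) (b : 'I_m) : graph (VV n m) :=
  mk (fun x y => ((x == inl a) || (y == inl a)) && [|| side x && side y, x == inr b | y == inr b]
              || ((x == inr b) || (y == inr b)) && [|| ~~ side x && ~~ side y, x == inl a | y == inl a]).

Lemma inl_eq (T1 T2 : eqType) (x y : T1) : (inl x == inl y :> T1 + T2) = (x == y). Proof. by []. Qed.
Lemma inr_eq (T1 T2 : eqType) (x y : T2) : (inr x == inr y :> T1 + T2) = (x == y). Proof. by []. Qed.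
Lemma inlr_eq (T1 T2 : eqType) (x : T1) (y : T2) : (inl x == inr y :> T1 + T2) = false. Proof. by []. Qed.
Lemma inrl_eq (T1 T2 : eqType) (x : T1) (y : T2) : (inr y == inl x :> T1 + T2) = false. Proof. by []. Qed.
Definition sumE := (inl_eq, inr_eq, inlr_eq, inrl_eq).

Ltac eqs := repeat (match goal with
 | |- context[?u == ?u] => rewrite eqxx
 | H : is_true (?u != ?w) |- context[?u == ?w] => rewrite (negbTE H)
 | H : is_true (?u != ?w) |- context[?w == ?u] => rewrite [w == u]eq_sym (negbTE H)
 | |- context[inl ?u == inl ?w] => rewrite inl_eq
 | |- context[inr ?u == inr ?w] => rewrite inr_eq
 | |- context[inl ?u == inr ?w] => rewrite inlr_eq
 | |- context[inr ?u == inl ?w] => rewrite inrl_eq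
 | |- context[?u == ?w] => is_var u; is_var w; case: (eqVneq u w) => [?|?]; [subst|]
 end; simpl).

Ltac lcsolve := apply/setP => [[[?|?] [?|?]]]; rewrite /local_complement !inE /adj ?inE /= ?sumE /=; eqs; done.

Lemma K_eq n m : K_bip n m = Kg n m.
Proof. by apply/setP => [[[?|?] [?|?]]]; rewrite !inE /= ?andbF. Qed.

Lemma lc_K_l n m i : local_complement (inl i) (Kg n m) = T2 n m.
Proof. lcsolve. Qed.
Lemma lc_K_r n m j : local_complement (inr j) (Kg n m) = T3 n m.
Proof. lcsolve. Qed.
Lemma lc_T2_l n m i : local_complement (inl i) (T2 n m) = Kg n m.
Proof. lcsolve. Qed.
Lemma lc_T2_r n m j : local_complement (inr j) (T2 n m) = T4 n j.
Proof. lcsolve. Qed.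
Lemma lc_T3_l n m i : local_complement (inl i) (T3 n m) = T5 m i.
Proof. lcsolve. Qed.
Lemma lc_T3_r n m j : local_complement (inr j) (T3 n m) = Kg n m.
Proof. lcsolve. Qed.
Lemma lc_T4_l n m b i : local_complement (inl i) (T4 n b) = Dg (m:=m) i b.
Proof. lcsolve. Qed.
Lemma lc_T4_r n m b j : local_complement (inr j) (T4 n b) = if j == b then T2 n m else T4 n b.
Proof. case: eqVneq => [->|h]; lcsolve. Qed.
Lemma lc_T5_r n m a j : local_complement (inr j) (T5 m a) = Dg (n:=n) a j.
Proof. lcsolve. Qed.
Lemma lc_T5_l n m a i : local_complement (inl i) (T5 m a) = if i == a then T3 n m else T5 m a.
Proof. case: eqVneq => [->|h]; lcsolve. Qed.
Lemma lc_D_l n m a b i : local_complement (inl i) (Dg a b) = if i == a then T4 n b else Dg (m:=m) a b.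
Proof. case: eqVneq => [->|h]; lcsolve. Qed.
Lemma lc_D_r n m a b j : local_complement (inr j) (Dg a b) = if j == b then T5 m a else Dg (n:=n) a b.
Proof. case: eqVneq => [->|h]; lcsolve. Qed.

Definition S n m : {set graph (VV n m)} :=
  [set Kg n m; T2 n m; T3 n m] :|: [set T4 n b | b : 'I_m] :|: [set T5 m a | a : 'I_n]
  :|: [set Dg a b | a : 'I_n, b : 'I_m].

Lemma S_ind n m (P : graph (VV n m) -> Prop) :
  P (Kg n m) -> P (T2 n m) -> P (T3 n m) -> (forall b, P (T4 n b)) ->
  (forall a, P (T5 m a)) -> (forall a b, P (Dg a b)) -> forall G, G \in S n m -> P G.
Proof.
move=> h1 h2 h3 h4 h5 h6 G.
case/setUP => [/setUP [/setUP [|]|]|].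
- by rewrite !inE => /orP [/orP [|]|] /eqP ->.
- by case/imsetP => b _ ->.
- by case/imsetP => a _ ->.
- by case/imset2P => a b _ _ ->.
Qed.

Lemma K_S n m : Kg n m \in S n m. Proof. by rewrite !inE eqxx. Qed.
Lemma T2_S n m : T2 n m \in S n m. Proof. by rewrite !inE eqxx !orbT. Qed.
Lemma T3_S n m : T3 n m \in S n m. Proof. by rewrite !inE eqxx !orbT. Qed.
Lemma T4_S n m b : T4 n b \in S n m.
Proof. by apply/setUP; left; apply/setUP; left; apply/setUP; right; apply: imset_f. Qed.
Lemma T5_S n m a : T5 m a \in S n m.
Proof. by apply/setUP; left; apply/setUP; right; apply: imset_f. Qed.
Lemma D_S n m a b : Dg a b \in S n m.
Proof. by apply/setUP; right; apply: imset2_f. Qed.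

Lemma S_closed n m G v : G \in S n m -> local_complement v G \in S n m.
Proof.
move: G; apply: S_ind; case: v => [i|j] *;
  rewrite ?lc_K_l ?lc_K_r ?lc_T2_l ?lc_T2_r ?lc_T3_l ?lc_T3_r ?lc_T4_l ?lc_T4_r
          ?lc_T5_l ?lc_T5_r ?lc_D_l ?lc_D_r; try case: ifP => _;
  by rewrite ?K_S ?T2_S ?T3_S ?T4_S ?T5_S ?D_S.
Qed.

Lemma lc1 (V : finType) (G : graph V) v : connect (@lc_step V) G (local_complement v G).
Proof. by apply: connect1; apply/existsP; exists v. Qed.

Lemma orbit_eq n m (o : 'I_n) (p : 'I_m) : lc_orbit (K_bip n m) = S n m.
Proof.
apply/setP => H; rewrite inE K_eq; apply/idP/idP.
- case/connectP => pth + ->; have : Kg n m \in S n m := K_S n m.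
  elim: pth (Kg n m) => [|G' pth IH] G //= GS /andP [/existsP [v /eqP ->]] hp.
  exact: IH (S_closed v GS) hp.
- have KT2 : connect (@lc_step _) (Kg n m) (T2 n m) by rewrite -(@lc_K_l n m o); apply: lc1.
  have KT3 : connect (@lc_step _) (Kg n m) (T3 n m) by rewrite -(@lc_K_r n m p); apply: lc1.
  have KT4 b : connect (@lc_step _) (Kg n m) (T4 n b).
    by apply: connect_trans KT2 _; rewrite -(@lc_T2_r n m b); apply: lc1.
  have KT5 a : connect (@lc_step _) (Kg n m) (T5 m a).
    by apply: connect_trans KT3 _; rewrite -(@lc_T3_l n m a); apply: lc1.
  move: H; apply: S_ind => //=; try exact: connect0.
  move=> a b; apply: connect_trans (KT4 b) _; rewrite -(@lc_T4_l n m b a); apply: lc1.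
Qed.

Lemma iso_of (V : finType) (G H : graph V) (f : V -> V) (fi : injective f) :
  (forall x y, adj G x y = adj H (f x) (f y)) -> isomorphic G H.
Proof.
move=> h; apply/existsP; exists (perm fi); apply/forallP => x; apply/forallP => y.
by rewrite !permE h.
Qed.

Lemma isoP (V : finType) (G H : graph V) :
  isomorphic G H -> exists s : {perm V}, forall x y, adj G x y = adj H (s x) (s y).
Proof.
case/existsP => s /forallP h; exists s => x y; exact/eqP/(forallP (h x) y).
Qed.

Lemma iso_sym (V : finType) (G H : graph V) : isomorphic G H -> isomorphic H G.
Proof.
case/isoP => s hs; apply: (iso_of (f := (s^-1)%g) (@perm_inj _ _)) => x y.
by rewrite hs !permKV.
Qed.

Lemma iso_trans (V : finType) (G H K : graph V) :
  isomorphic G H -> isomorphic H K -> isomorphic G K.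
Proof.
case/isoP => s hs /isoP [t ht]; apply: (iso_of (f := t \o s)) => [x y /= /perm_inj /perm_inj //|x y].
by rewrite hs ht.
Qed.

Definition U (V : finType) (G : graph V) := [set x | [forall y, (y != x) ==> adj G x y]].
Definition L (V : finType) (G : graph V) := [set x | #|[set y | adj G x y]| == 1].

Lemma iso_U (V : finType) (G H : graph V) : isomorphic G H -> #|U G| = #|U H|.
Proof.
case/isoP => s hs; rewrite -(card_preimset (U H) (@perm_inj _ s)).
apply: eq_card => x; rewrite !inE.
apply/forallP/forallP => h y.
- by rewrite -(permKV s y) (inj_eq perm_inj) -hs; exact: h.
- by have := h (s y); rewrite (inj_eq perm_inj) -hs.
Qed.

Lemma iso_L (V : finType) (G H : graph V) : isomorphic G H -> #|L G| = #|L H|.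
Proof.
case/isoP => s hs; rewrite -(card_preimset (L H) (@perm_inj _ s)).
apply: eq_card => x; rewrite !inE.
rewrite -(card_preimset [set y | adj H (s x) y] (@perm_inj _ s)).
congr (_ == 1); apply: eq_card => y.
by rewrite !inE hs.
Qed.

Definition fD n m (a a' : 'I_n) (b b' : 'I_m) (x : VV n m) : VV n m :=
  match x with inl i => inl (tperm a a' i) | inr j => inr (tperm b b' j) end.
Lemma fD_inj n m (a a' : 'I_n) (b b' : 'I_m) : injective (fD a a' b b').
Proof. by move=> [i|j] [i'|j'] //= [] /perm_inj ->. Qed.

Definition fS n (x : VV n n) : VV n n := match x with inl i => inr i | inr j => inl j end.
Lemma fS_inj n : injective (@fS n).
Proof. by move=> [i|j] [i'|j'] //= [] ->. Qed.

Ltac isosolve := move=> [?|?] [?|?]; rewrite !adj_mk /= ?permE /=; eqs; done.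

Lemma iso_D n m (a a' : 'I_n) (b b' : 'I_m) : isomorphic (Dg a b) (Dg a' b').
Proof. apply: (iso_of (@fD_inj n m a a' b b')); isosolve. Qed.
Lemma iso_T4 n m (a : 'I_n) (b b' : 'I_m) : isomorphic (T4 n b) (T4 n b').
Proof. apply: (iso_of (@fD_inj n m a a b b')); isosolve. Qed.
Lemma iso_T5 n m (a a' : 'I_n) (b : 'I_m) : isomorphic (T5 m a) (T5 m a').
Proof. apply: (iso_of (@fD_inj n m a a' b b)); isosolve. Qed.
Lemma iso_T23 n : isomorphic (T2 n n) (T3 n n).
Proof. apply: (iso_of (@fS_inj n)); isosolve. Qed.
Lemma iso_T45 n (a : 'I_n) : isomorphic (T4 n a) (T5 n a).
Proof. apply: (iso_of (@fS_inj n)); isosolve. Qed.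

Lemma forall_wit (V : finType) (P : pred V) (s : seq V) : ~~ all P s -> [forall y, P y] = false.
Proof. move=> h; apply/negbTE; apply: contra h => /forallP h; exact/allP => y _. Qed.

Lemma card_ne1 (V : finType) (A : {set V}) (s : seq V) :
  has (fun y => has (fun z => (y != z) && (y \in A) && (z \in A)) s) s -> (#|A| == 1) = false.
Proof.
move=> /hasP [y _ /hasP [z _ /andP [/andP [yz yA] zA]]].
apply/negbTE/cards1P => -[w hw]; move: yA zA yz; rewrite hw !inE => /eqP -> /eqP ->.
by rewrite eqxx.
Qed.

Ltac usolve c := apply/setP => -[?|?]; rewrite !inE /=; eqs;
   first [ apply/forallP => -[?|?]; rewrite adj_mk /=; eqs; done
         | apply: (@forall_wit _ _ c); rewrite /= !adj_mk /=; eqs; done ].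

Lemma U_K n m (o1 o2 : 'I_n) (p1 p2 : 'I_m) (ho : o1 != o2) (hp : p1 != p2) :
  U (Kg n m) = set0.
Proof. rewrite /U; usolve [:: (inl o1 : VV n m); inl o2; inr p1; inr p2]. Qed.
Lemma U_T2 n m (o1 o2 : 'I_n) (p1 p2 : 'I_m) (ho : o1 != o2) (hp : p1 != p2) :
  U (T2 n m) = [set x | ~~ side x].
Proof. rewrite /U; usolve [:: (inl o1 : VV n m); inl o2; inr p1; inr p2]. Qed.
Lemma U_T3 n m (o1 o2 : 'I_n) (p1 p2 : 'I_m) (ho : o1 != o2) (hp : p1 != p2) :
  U (T3 n m) = [set x | side x].
Proof. rewrite /U; usolve [:: (inl o1 : VV n m); inl o2; inr p1; inr p2]. Qed.
Lemma U_T4 n m (o1 o2 : 'I_n) (p1 p2 : 'I_m) (ho : o1 != o2) (hp : p1 != p2) (b : 'I_m) :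
  U (T4 n b) = [set (inr b : VV n m)].
Proof. rewrite /U; usolve [:: (inl o1 : VV n m); inl o2; inr p1; inr p2]. Qed.
Lemma U_T5 n m (o1 o2 : 'I_n) (p1 p2 : 'I_m) (ho : o1 != o2) (hp : p1 != p2) (a : 'I_n) :
  U (T5 m a) = [set (inl a : VV n m)].
Proof. rewrite /U; usolve [:: (inl o1 : VV n m); inl o2; inr p1; inr p2]. Qed.
Lemma U_D n m (o1 o2 : 'I_n) (p1 p2 : 'I_m) (ho : o1 != o2) (hp : p1 != p2) (a : 'I_n) (b : 'I_m) :
  U (Dg a b) = set0.
Proof. rewrite /U; usolve [:: (inl o1 : VV n m); inl o2; inr p1; inr p2]. Qed.

Ltac lsolve c w := apply/setP => -[?|?]; rewrite !inE /=; eqs;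
   first [ apply: (@card_ne1 _ _ c); rewrite /= !inE !adj_mk /=; eqs; done
         | apply/cards1P; exists w; apply/setP => -[?|?]; rewrite !inE adj_mk /=; eqs; done ].

Lemma L_K n m (o1 o2 : 'I_n) (p1 p2 : 'I_m) (ho : o1 != o2) (hp : p1 != p2) :
  L (Kg n m) = set0.
Proof. rewrite /L; lsolve [:: (inl o1 : VV n m); inl o2; inr p1; inr p2] (inl o1 : VV n m). Qed.
Lemma L_T4 n m (o1 o2 : 'I_n) (p1 p2 : 'I_m) (ho : o1 != o2) (hp : p1 != p2) (b : 'I_m) :
  L (T4 n b) = [set x | ~~ side x] :\ (inr b : VV n m).
Proof. rewrite /L; lsolve [:: (inl o1 : VV n m); inl o2; inr p1; inr p2; inr b] (inr b : VV n m). Qed.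
Lemma L_T5 n m (o1 o2 : 'I_n) (p1 p2 : 'I_m) (ho : o1 != o2) (hp : p1 != p2) (a : 'I_n) :
  L (T5 m a) = [set x | side x] :\ (inl a : VV n m).
Proof. rewrite /L; lsolve [:: (inl o1 : VV n m); inl o2; inr p1; inr p2; inl a] (inl a : VV n m). Qed.
Lemma L_D n m (o1 o2 : 'I_n) (b : 'I_m) (ho : o1 != o2) :
  inl o2 \in L (Dg (m := m) o1 b).
Proof.
rewrite inE; apply/cards1P; exists (inl o1); apply/setP => -[?|?]; rewrite !inE adj_mk /=; eqs; done.
Qed.

Lemma card_sideT n m : #|[set x : VV n m | side x]| = n.
Proof.
transitivity #|(@inl 'I_n 'I_m) @: [set: 'I_n]|.
  apply: eq_card => -[i|j]; rewrite !inE /=; first by rewrite imset_f.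
  by apply/esym/negbTE/imsetP => -[? _].
by rewrite card_imset ?cardsT ?card_ord // => x y [].
Qed.
Lemma card_sideF n m : #|[set x : VV n m | ~~ side x]| = m.
Proof.
transitivity #|(@inr 'I_n 'I_m) @: [set: 'I_m]|.
  apply: eq_card => -[i|j]; rewrite !inE /=; last by rewrite imset_f.
  by apply/esym/negbTE/imsetP => -[? _].
by rewrite card_imset ?cardsT ?card_ord // => x y [].
Qed.

Lemma iso_refl (V : finType) (G : graph V) : isomorphic G G.
Proof. by apply: (iso_of (f := id)). Qed.

Definition cls n m (G : graph (VV n m)) := [set H in S n m | isomorphic G H].

Lemma cls_iso n m (G G' : graph (VV n m)) : isomorphic G G' -> cls G = cls G'.
Proof.
move=> h; apply/setP => H; rewrite !inE; apply: andb_id2l => _.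
apply/idP/idP => h'; [exact: iso_trans (iso_sym h) h' | exact: iso_trans h h'].
Qed.

Lemma cls_neq n m (G G' : graph (VV n m)) : G' \in S n m -> ~~ isomorphic G G' -> cls G != cls G'.
Proof.
move=> GS; apply: contra => /eqP e.
have : G' \in cls G' by rewrite inE GS iso_refl.
by rewrite -e inE => /andP [].
Qed.
Lemma LD_pos n m (o1 o2 : 'I_n) (b : 'I_m) (ho : o1 != o2) : 0 < #|L (Dg (m := m) o1 b)|.
Proof. by apply/card_gt0P; exists (inl o2); apply: L_D. Qed.

Lemma iso_UL (V : finType) (G H : graph V) : isomorphic G H -> #|U G| = #|U H| /\ #|L G| = #|L H|.
Proof. by move=> h; split; [apply: iso_U | apply: iso_L]. Qed.

Lemma cardDF n m (b : 'I_m) : #|[set x : VV n m | ~~ side x] :\ inr b| = m.-1.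
Proof. have := cardsD1 (inr b) [set x : VV n m | ~~ side x]; rewrite card_sideF inE /=; lia. Qed.
Lemma cardDT n m (a : 'I_n) : #|[set x : VV n m | side x] :\ inl a| = n.-1.
Proof. have := cardsD1 (inl a) [set x : VV n m | side x]; rewrite card_sideT inE /=; lia. Qed.

Ltac noniso ho hp := apply: cls_neq; rewrite ?K_S ?T2_S ?T3_S ?T4_S ?T5_S ?D_S //;
  apply/negP => /iso_UL [];
  rewrite ?(U_K ho hp) ?(U_T2 ho hp) ?(U_T3 ho hp) ?(U_T4 ho hp) ?(U_T5 ho hp) ?(U_D ho hp)
          ?(L_K ho hp) ?(L_T4 ho hp) ?(L_T5 ho hp) ?cards0 ?cards1 ?card_sideT ?card_sideF;
  rewrite ?cardDF ?cardDT; lia.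

Lemma main_neq n m (o1 o2 : 'I_n) (p1 p2 : 'I_m) (ho : o1 != o2) (hp : p1 != p2) (hn : 1 < n) (hm : 1 < m) :
  n != m -> #|[set cls G | G in S n m]| = 6.
Proof.
move=> hnm.
have -> : [set cls G | G in S n m] =
  [set X in [:: cls (Kg n m); cls (T2 n m); cls (T3 n m); cls (T4 n p1); cls (T5 m o1); cls (Dg o1 p1)]].
  apply/setP => X; rewrite inE; apply/idP/idP.
  - case/imsetP => G GS ->; move: G GS; apply: S_ind => [|||b|a|a b].
    + by rewrite !inE eqxx.
    + by rewrite !inE eqxx !orbT.
    + by rewrite !inE eqxx !orbT.
    + by rewrite (cls_iso (iso_T4 o1 b p1)) !inE eqxx !orbT.
    + by rewrite (cls_iso (iso_T5 a o1 p1)) !inE eqxx !orbT.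
    + by rewrite (cls_iso (iso_D a o1 b p1)) !inE eqxx !orbT.
  - move: X; apply/allP.
    by rewrite /= !imset_f ?K_S ?T2_S ?T3_S ?T4_S ?T5_S ?D_S.
rewrite cardsE; apply/card_uniqP.
rewrite /= !inE !negb_or -!andbA.
repeat (apply/andP; split); try noniso ho hp.
apply: cls_neq; rewrite ?D_S //; apply/negP => /iso_UL [] _.
rewrite (L_K ho hp) cards0; have := @LD_pos n m o1 o2 p1 ho; lia.
all: by [].
Qed.

Lemma main_eq n (o1 o2 : 'I_n) (ho : o1 != o2) (hn : 1 < n) :
  #|[set cls G | G in S n n]| = 4.
Proof.
have -> : [set cls G | G in S n n] =
  [set X in [:: cls (Kg n n); cls (T2 n n); cls (T4 n o1); cls (Dg o1 o1)]].
  apply/setP => X; rewrite inE; apply/idP/idP.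
  - case/imsetP => G GS ->; move: G GS; apply: S_ind => [|||b|a|a b].
    + by rewrite !inE eqxx.
    + by rewrite !inE eqxx !orbT.
    + by rewrite -(cls_iso (iso_T23 n)) !inE eqxx !orbT.
    + by rewrite (cls_iso (iso_T4 o1 b o1)) !inE eqxx !orbT.
    + by rewrite (cls_iso (iso_T5 a o1 o1)) -(cls_iso (iso_T45 o1)) !inE eqxx !orbT.
    + by rewrite (cls_iso (iso_D a o1 b o1)) !inE eqxx !orbT.
  - move: X; apply/allP.
    by rewrite /= !imset_f ?K_S ?T2_S ?T3_S ?T4_S ?T5_S ?D_S.
rewrite cardsE; apply/card_uniqP.
rewrite /= !inE !negb_or -!andbA.
repeat (apply/andP; split); try noniso ho ho.
apply: cls_neq; rewrite ?D_S //; apply/negP => /iso_UL [] _.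
rewrite (L_K ho ho) cards0; have := @LD_pos n n o1 o2 o1 ho; lia.
all: by [].
Qed.

Theorem theorem6 (n m : nat) :
  2 <= n -> 2 <= m ->
  num_iso_classes (lc_orbit (K_bip n m)) = (if n != m then 6 else 4).
Proof.
move=> hn hm.
pose o1 : 'I_n := Ordinal (ltnW hn); pose o2 : 'I_n := Ordinal hn.
pose p1 : 'I_m := Ordinal (ltnW hm); pose p2 : 'I_m := Ordinal hm.
have ho : o1 != o2 by []. have hp : p1 != p2 by [].
rewrite /num_iso_classes (orbit_eq o1 p1).
case: eqVneq => [e|hnm] /=.
- clear hp; clearbody p1 p2; clear p1 p2; subst m.
  exact: (main_eq ho hn).
- exact: (main_neq ho hp hn hm hnm).
Qed.
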